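(* Let $\{S_i\mid i\in I\}$ be a collection of semigroups and let $F=\prod^{*}\{S_i\mid i\in I\}$ be their semigroup free product. Then $F^1$ is finitely right equated if and only if each $S_i^1$ ($i\in I$) is finitely right equated.
   Context: $S^1$ denotes $S$ if $S$ is a monoid and otherwise $S$ with an identity adjoined. For a semigroup $S$ and $a\in S$, $\mathbf{r}_S(a)=\{(s,t)\in S\times S\mid as=at\}$; $S$ is finitely right equated if each $\mathbf{r}_S(a)$ is finitely generated as a right congruence. The semigroup free product of pairwise disjoint semigroups $S_i$ consists of sequences $s_1*\dots*s_n$ with $s_j\in\bigsqcup S_i$ and consecutive entries from different $S_i$, multiplied by concatenation, multiplying the two adjacent entries if they lie in the same $S_i$. *)

(* Defs.v *)
From Stdlib Require Import List ClassicalEpsilon.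
Import ListNotations.
Set Implicit Arguments.

Section RightEquated.
Variable T : Type.
Variable m : T -> T -> T.

Definition is_right_congruence (rho : T -> T -> Prop) : Prop :=
  (forall x, rho x x) /\
  (forall x y, rho x y -> rho y x) /\
  (forall x y z, rho x y -> rho y z -> rho x z) /\
  (forall x y u, rho x y -> rho (m x u) (m y u)).

Definition right_congruence_generated (X : list (T * T)) : T -> T -> Prop :=
  fun s t => forall rho, is_right_congruence rho ->
    (forall p, In p X -> rho (fst p) (snd p)) -> rho s t.

Definition r_ann (a : T) : T -> T -> Prop := fun s t => m a s = m a t.

Definition finitely_generated_right_congruence (rho : T -> T -> Prop) : Prop :=
  exists X : list (T * T), forall s t, rho s t <-> right_congruence_generated X s t.

Definition finitely_right_equated : Prop :=
  forall a, finitely_generated_right_congruence (r_ann a).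

Definition is_monoid : Prop := exists e, forall x, m e x = x /\ m x e = x.

Definition adjoin_one_op (x y : option T) : option T :=
  match x, y with
  | None, _ => y
  | _, None => x
  | Some a, Some b => Some (m a b)
  end.

End RightEquated.

(** "S^1 is finitely right equated", where S^1 = S if S is a monoid and
    S with an identity adjoined otherwise. *)
Definition one_finitely_right_equated (T : Type) (m : T -> T -> T) : Prop :=
  (is_monoid m -> finitely_right_equated m) /\
  (~ is_monoid m -> finitely_right_equated (adjoin_one_op m)).

Section FreeProduct.
Variable I : Type.
Variable S : I -> Type.
Variable op : forall i, S i -> S i -> S i.

Definition letter := {i : I & S i}.

Fixpoint alternating (w : list letter) : Prop :=
  match w with
  | nil => True
  | x :: w' => match w' with
               | nil => True
               | y :: _ => projT1 x <> projT1 y /\ alternating w'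
               end
  end.

Definition fp_word := { w : list letter | w <> nil /\ alternating w }.

(** concatenation, multiplying the two adjacent entries if they lie in the
    same S_i *)
Definition glue (w1 w2 : list letter) : list letter :=
  match rev w1, w2 with
  | x :: u, y :: v =>
      match excluded_middle_informative (projT1 x = projT1 y) with
      | left e => rev u ++ (existT S (projT1 y)
                    (op (eq_rect _ S (projT2 x) _ e) (projT2 y))) :: v
      | right _ => w1 ++ w2
      end
  | _, _ => w1 ++ w2
  end.

Lemma alt_app a x b :
  alternating (a ++ [x]) -> alternating (x :: b) -> alternating (a ++ x :: b).
Proof.
  induction a as [|z a IH]; simpl; auto.
  destruct a as [|w a]; simpl in *.
  - intros [H _] H2; split; auto.
  - intros [H H1] H2; split; auto. apply (IH H1 H2).
Qed.

Lemma alt_last_replace a x x' :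
  alternating (a ++ [x]) -> projT1 x = projT1 x' -> alternating (a ++ [x']).
Proof.
  induction a as [|z a IH]; simpl; auto.
  destruct a as [|w a]; simpl in *.
  - intros [H _] E; rewrite <- E; split; auto.
  - intros [H H1] E; split; auto. apply (IH H1 E).
Qed.

Lemma alt_head_replace y y' v :
  alternating (y :: v) -> projT1 y = projT1 y' -> alternating (y' :: v).
Proof.
  destruct v; simpl; auto. intros [H H1] E; rewrite <- E; split; auto.
Qed.

Lemma glue_ok w1 w2 :
  w1 <> nil /\ alternating w1 -> w2 <> nil /\ alternating w2 ->
  glue w1 w2 <> nil /\ alternating (glue w1 w2).
Proof.
  intros [N1 A1] [N2 A2]. unfold glue.
  assert (R : w1 = rev (rev w1)) by (symmetry; apply rev_involutive).
  destruct (rev w1) as [|x u] eqn:E1.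
  - simpl in R; subst; congruence.
  - destruct w2 as [|y v]; [congruence|].
    simpl in R.
    destruct (excluded_middle_informative (projT1 x = projT1 y)) as [e|ne].
    + split.
      * destruct (rev u); discriminate.
      * apply alt_app.
        -- apply alt_last_replace with x; [rewrite <- R; exact A1 | exact e].
        -- apply alt_head_replace with y; auto.
    + split.
      * destruct w1; discriminate.
      * rewrite R, <- app_assoc; simpl. apply alt_app.
        -- rewrite <- R; exact A1.
        -- simpl. split; auto.
Qed.

Definition fp_mul (p q : fp_word) : fp_word :=
  exist _ (glue (proj1_sig p) (proj1_sig q)) (glue_ok (proj2_sig p) (proj2_sig q)).
End FreeProduct.

(* Main.v *)
Require Import Defs.
From Stdlib Require Import List ClassicalEpsilon ProofIrrelevance Eqdep.
Import ListNotations.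


Section G.
Variable T : Type.
Variable m : T -> T -> T.

Lemma gen_rc X : is_right_congruence m (right_congruence_generated m X).
Proof.
  unfold right_congruence_generated; repeat split.
  - intros x rho Hr _; apply (proj1 Hr).
  - intros x y H rho Hr HX; pose proof Hr as [_ [Sy _]]; apply Sy, H; auto.
  - intros x y z H1 H2 rho Hr HX; pose proof Hr as [_ [_ [Tr _]]].
    apply Tr with y; [apply H1|apply H2]; auto.
  - intros x y u H rho Hr HX; pose proof Hr as [_ [_ [_ M]]].
    apply M, H; auto.
Qed.

Lemma gen_in X p : In p X -> right_congruence_generated m X (fst p) (snd p).
Proof. intros H rho _ HX; apply HX, H. Qed.

Lemma rc_iff (rho rho' : T -> T -> Prop) :
  is_right_congruence m rho -> (forall s t, rho s t <-> rho' s t) ->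
  is_right_congruence m rho'.
Proof.
  intros [R [Sy [Tr M]]] E; repeat split; intros; rewrite <- E in *; eauto.
Qed.

Lemma eq_rc : is_right_congruence m eq.
Proof. repeat split; intros; subst; auto. Qed.

Lemma gen_nil s t : right_congruence_generated m [] s t <-> s = t.
Proof.
  split.
  - intro H; apply H; [apply eq_rc| intros p []].
  - intros ->; apply (proj1 (gen_rc _)).
Qed.
End G.

Lemma rc_pullback A B (mA : A -> A -> A) (mB : B -> B -> B) (f : A -> B)
  (rho : B -> B -> Prop) :
  (forall x y, f (mA x y) = mB (f x) (f y)) ->
  is_right_congruence mB rho ->
  is_right_congruence mA (fun x y => rho (f x) (f y)).
Proof.
  intros Hf [R [Sy [Tr M]]]; repeat split; intros; eauto.
  rewrite !Hf; auto.
Qed.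

Lemma r_none T (M : T -> T -> T) s t : r_ann (adjoin_one_op M) None s t <-> s = t.
Proof. unfold r_ann; simpl; tauto. Qed.

Section L.
Variable T : Type.
Variable m : T -> T -> T.
Variable e : T.
Hypothesis He : forall x, m e x = x /\ m x e = x.

Definition phi (s : option T) : T := match s with None => e | Some x => x end.

Lemma phi_hom x y : phi (adjoin_one_op m x y) = m (phi x) (phi y).
Proof.
  destruct x as [x|], y as [y|]; simpl; auto.
  - symmetry; apply He.
  - symmetry; apply He.
  - symmetry; apply He.
Qed.

Lemma Some_hom x y : Some (m x y) = adjoin_one_op m (Some x) (Some y).
Proof. reflexivity. Qed.

Lemma r_one a s t :
  r_ann (adjoin_one_op m) (Some a) s t <-> r_ann m a (phi s) (phi t).
Proof.
  unfold r_ann; destruct s as [s|], t as [t|]; simpl;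
   rewrite ?(proj2 (He a)); split; congruence.
Qed.


Lemma L_to : finitely_right_equated m -> finitely_right_equated (adjoin_one_op m).
Proof.
  intros H [a|].
  2:{ exists []; intros s t; rewrite r_none, gen_nil; tauto. }
  destruct (H a) as [Y HY].
  exists ((None, Some e) :: map (fun p => (Some (fst p), Some (snd p))) Y).
  intros s t; rewrite r_one, HY; split.
  - intros G rho Hr HX.
    assert (A : right_congruence_generated m Y (phi s) (phi t)) by exact G.
    assert (B : rho (Some (phi s)) (Some (phi t))).
    { apply (A (fun p q => rho (Some p) (Some q))).
      - apply (rc_pullback _ _ m (adjoin_one_op m) Some rho Some_hom Hr).
      - intros p Hp. apply (HX (Some (fst p), Some (snd p))). right.
        apply (in_map (fun p => (Some (fst p), Some (snd p))) Y p Hp). }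
    destruct Hr as [R [Sy [Tr _]]].
    assert (C : forall u, rho u (Some (phi u))).
    { intros [u|]; simpl; auto. apply (HX (None, Some e)); left; auto. }
    eapply Tr; [apply C|]. eapply Tr; [exact B|]. apply Sy, C.
  - intro G.
    assert (Rc : is_right_congruence (adjoin_one_op m)
       (fun x y => right_congruence_generated m Y (phi x) (phi y))).
    { apply (rc_pullback _ _ (adjoin_one_op m) m phi); [apply phi_hom| apply gen_rc]. }
    apply (G _ Rc).
    intros p [<-|Hp]; simpl.
    + apply (proj1 (gen_rc _ m Y)).
    + apply in_map_iff in Hp; destruct Hp as [q [<- Hq]]; simpl.
      apply (gen_in _ m Y q Hq).
Qed.

Lemma L_from : finitely_right_equated (adjoin_one_op m) -> finitely_right_equated m.
Proof.
  intros H a.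
  destruct (H (Some a)) as [X HX].
  exists (map (fun p => (phi (fst p), phi (snd p))) X).
  intros s t.
  assert (E : r_ann m a s t <-> r_ann (adjoin_one_op m) (Some a) (Some s) (Some t))
    by (rewrite r_one; tauto).
  rewrite E, HX; split.
  - intros G rho Hr HY.
    apply (G (fun x y => rho (phi x) (phi y))).
    + apply (rc_pullback _ _ (adjoin_one_op m) m phi); [apply phi_hom| exact Hr].
    + intros p Hp; apply (HY (phi (fst p), phi (snd p))).
      apply (in_map (fun p => (phi (fst p), phi (snd p))) X p Hp).
  - intro G.
    assert (Rc : is_right_congruence m
      (fun x y => right_congruence_generated (adjoin_one_op m) X (Some x) (Some y))).
    { apply (rc_pullback _ _ m (adjoin_one_op m) Some); [apply Some_hom| apply gen_rc]. }
    apply (G _ Rc).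
    intros p Hp; apply in_map_iff in Hp; destruct Hp as [q [<- Hq]]; simpl.
    apply HX; apply r_one; simpl.
    destruct q as [q1 q2]; apply r_one, HX, (gen_in _ _ X (q1,q2) Hq).
Qed.
End L.

Lemma L_iff T (m : T -> T -> T) :
  one_finitely_right_equated m <-> finitely_right_equated (adjoin_one_op m).
Proof.
  split.
  - intros [H1 H2]. destruct (classic (is_monoid m)) as [[e He]|N]; auto.
    apply (L_to _ m e He), H1; exists e; auto.
  - intro H; split; auto. intros [e He]; apply (L_from _ m e He H).
Qed.


Section FP.
Variable I : Type.
Variable S : I -> Type.
Variable op : forall i, S i -> S i -> S i.

Notation L := (list (letter S)).
Notation gl := (glue op).

Lemma glue_nil_l l : gl [] l = l.
Proof. reflexivity. Qed.

Lemma glue_nil_r l : gl l [] = l.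
Proof. unfold glue; destruct (rev l); apply app_nil_r. Qed.

Lemma glue_snoc_cons a x y v : gl (a ++ [x]) (y :: v) =
  match excluded_middle_informative (projT1 x = projT1 y) with
  | left e => a ++ (existT S (projT1 y)
                    (op _ (eq_rect _ S (projT2 x) _ e) (projT2 y))) :: v
  | right _ => (a ++ [x]) ++ y :: v
  end.
Proof. unfold glue; rewrite rev_app_distr; simpl; rewrite rev_involutive; reflexivity. Qed.

Lemma glue_merge a i x0 y0 v :
  gl (a ++ [existT S i x0]) (existT S i y0 :: v) = a ++ existT S i (op i x0 y0) :: v.
Proof.
  rewrite glue_snoc_cons; simpl.
  destruct (excluded_middle_informative (i = i)) as [e|n]; [|congruence].
  rewrite (UIP_refl _ _ e); reflexivity.
Qed.

Lemma glue_nomerge a x y v : projT1 x <> projT1 y ->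
  gl (a ++ [x]) (y :: v) = a ++ x :: y :: v.
Proof.
  intro n; rewrite glue_snoc_cons.
  destruct (excluded_middle_informative _) as [e|_]; [congruence|].
  rewrite <- app_assoc; reflexivity.
Qed.

Lemma glue_merge1 i x0 y0 v :
  gl [existT S i x0] (existT S i y0 :: v) = existT S i (op i x0 y0) :: v.
Proof. exact (glue_merge [] i x0 y0 v). Qed.

Lemma glue_nomerge1 x y v : projT1 x <> projT1 y ->
  gl [x] (y :: v) = x :: y :: v.
Proof. exact (glue_nomerge [] x y v). Qed.

Lemma glue_cons h t w : t <> [] -> gl (h :: t) w = h :: gl t w.
Proof.
  intro N. destruct (exists_last N) as [t' [z ->]].
  destruct w as [|y v]; [rewrite !glue_nil_r; reflexivity|].
  change (h :: t' ++ [z]) with ((h :: t') ++ [z]).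
  rewrite !glue_snoc_cons.
  destruct (excluded_middle_informative _); reflexivity.
Qed.

Lemma glue_head z r0 w : exists z' r', gl (z :: r0) w = z' :: r' /\ projT1 z' = projT1 z.
Proof.
  destruct r0 as [|a r0].
  - destruct w as [|y v].
    + exists z, []; split; [apply glue_nil_r| reflexivity].
    + change [z] with ([] ++ [z]); rewrite glue_snoc_cons.
      destruct (excluded_middle_informative _) as [e|n]; simpl.
      * eexists; eexists; split; [reflexivity|]; simpl; congruence.
      * eexists; eexists; split; [reflexivity|]; reflexivity.
  - rewrite glue_cons by discriminate. eexists; eexists; split; reflexivity.
Qed.

Section Idx.
Variable i : I.

Definition hd_i (l : L) : option (S i) :=
  match l with
  | [] => None
  | y :: _ => match excluded_middle_informative (projT1 y = i) with
              | left e => Some (eq_rect _ S (projT2 y) _ e)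
              | right _ => None
              end
  end.

Definition tl_i (l : L) : L :=
  match l with
  | [] => []
  | y :: l' => if excluded_middle_informative (projT1 y = i) then l' else l
  end.

Lemma hd_same y l : hd_i (existT S i y :: l) = Some y.
Proof.
  simpl; destruct (excluded_middle_informative (i = i)) as [e|n]; [|congruence].
  rewrite (UIP_refl _ _ e); reflexivity.
Qed.

Lemma tl_same y l : tl_i (existT S i y :: l) = l.
Proof.
  simpl; destruct (excluded_middle_informative (i = i)) as [e|n]; [|congruence]; auto.
Qed.

Lemma hd_diff y l : projT1 y <> i -> hd_i (y :: l) = None.
Proof. intro n; simpl; destruct (excluded_middle_informative _); [congruence|auto]. Qed.

Lemma tl_diff y l : projT1 y <> i -> tl_i (y :: l) = y :: l.
Proof. intro n; simpl; destruct (excluded_middle_informative _); [congruence|auto]. Qed.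

Definition adjS := adjoin_one_op (op i).

Lemma split_glue s w :
  (tl_i s <> [] -> hd_i (gl s w) = hd_i s /\ tl_i (gl s w) = gl (tl_i s) w) /\
  (tl_i s = [] -> hd_i (gl s w) = adjS (hd_i s) (hd_i w) /\ tl_i (gl s w) = tl_i w).
Proof.
  destruct s as [|z s0].
  - split; [simpl; congruence|]. intros _; rewrite glue_nil_l; simpl; auto.
  - destruct (excluded_middle_informative (projT1 z = i)) as [e|n].
    + destruct z as [j z0]; simpl in e; subst j.
      rewrite hd_same, tl_same.
      destruct s0 as [|a s0].
      * split; [congruence|]. intros _.
        destruct w as [|y v].
        -- rewrite glue_nil_r, hd_same, tl_same; simpl; auto.
        -- destruct y as [j y0].
           destruct (excluded_middle_informative (j = i)) as [e|n].
           ++ subst j.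
              rewrite glue_merge1; rewrite !hd_same, !tl_same; auto.
           ++ 
              rewrite glue_nomerge1 by (simpl; congruence); simpl app.
              rewrite !hd_same, !tl_same, hd_diff, tl_diff by (simpl; auto); auto.
      * split; [|congruence]. intros _.
        rewrite glue_cons by discriminate. rewrite hd_same, tl_same; auto.
    + rewrite hd_diff, tl_diff by auto. split; [|congruence]. intros _.
      destruct (glue_head z s0 w) as [z' [r' [E1 E2]]]. rewrite E1.
      rewrite hd_diff, tl_diff by congruence; auto.
Qed.

Definition iL (u : option (S i)) : L :=
  match u with None => [] | Some y => [existT S i y] end.

Lemma hd_iL u : hd_i (iL u) = u.
Proof. destruct u; [apply hd_same|reflexivity]. Qed.
Lemma tl_iL u : tl_i (iL u) = [].
Proof. destruct u; [apply tl_same|reflexivity]. Qed.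

Lemma recon l : alternating l -> l = gl (iL (hd_i l)) (tl_i l).
Proof.
  destruct l as [|z l0]; [reflexivity|].
  intro A.
  destruct (excluded_middle_informative (projT1 z = i)) as [e|n].
  - destruct z as [j z0]; simpl in e; subst j. rewrite hd_same, tl_same; simpl.
    destruct l0 as [|y v]; [rewrite glue_nil_r; auto|].
    rewrite glue_nomerge1; auto. simpl in A; destruct A; auto.
  - rewrite hd_diff, tl_diff by auto; reflexivity.
Qed.

Lemma alt_tl l : alternating l -> alternating (tl_i l).
Proof.
  destruct l as [|z l0]; simpl; auto.
  destruct (excluded_middle_informative _); auto.
  destruct l0; simpl; tauto.
Qed.

Definition star (x0 : S i) (u : option (S i)) : S i :=
  match u with None => x0 | Some u => op i x0 u end.

Lemma adjS_star x0 u : adjS (Some x0) u = Some (star x0 u).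
Proof. destruct u; reflexivity. Qed.

Lemma glue_last a x0 l :
  gl (a ++ [existT S i x0]) l = a ++ existT S i (star x0 (hd_i l)) :: tl_i l.
Proof.
  destruct l as [|y v]; [rewrite glue_nil_r; reflexivity|].
  destruct y as [j y0].
  destruct (excluded_middle_informative (j = i)) as [e|n].
  - subst j. rewrite glue_merge, hd_same, tl_same; reflexivity.
  - rewrite glue_nomerge by (simpl; congruence).
    rewrite hd_diff, tl_diff by (simpl; auto); reflexivity.
Qed.

End Idx.
End FP.
Arguments hd_i {I S} i l.
Arguments tl_i {I S} i l.
Arguments iL {I S} i u.
Arguments adjS {I S} op i x y.
Arguments star {I S} op i x0 u.
Arguments glue_nil_r {I S} op l.
Arguments glue_nil_l {I S} op l.
Arguments glue_merge1 {I S} op i x0 y0 v.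
Arguments split_glue {I S} op i s w.
Arguments recon {I S} op i l _.
Arguments glue_last {I S} op i a x0 l.
Arguments adjS_star {I S} op i x0 u.
Arguments hd_iL {I S} i u.
Arguments tl_iL {I S} i u.
Arguments alt_tl {I S} i l _.


Section FP2.
Variable I : Type.
Variable S : I -> Type.
Variable op : forall i, S i -> S i -> S i.

Notation L := (list (letter S)).
Notation gl := (glue op).
Notation W := (option (fp_word S)).
Definition Fm : W -> W -> W := adjoin_one_op (fp_mul op).

Definition toL (s : W) : L := match s with None => [] | Some w => proj1_sig w end.

Lemma toL_inj s t : toL s = toL t -> s = t.
Proof.
  destruct s as [[l [N A]]|], t as [[l' [N' A']]|]; simpl; intro E; subst; auto.
  - f_equal. f_equal. apply proof_irrelevance.
  - congruence.
  - congruence.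
Qed.

Lemma toL_mul s t : toL (Fm s t) = gl (toL s) (toL t).
Proof.
  destruct s as [w|], t as [w'|]; simpl; auto.
  - rewrite glue_nil_r; auto.
Qed.

Lemma toL_alt s : alternating (toL s).
Proof. destruct s as [[l [N A]]|]; simpl; auto. Qed.

Lemma ofL l : alternating l -> exists s, toL s = l.
Proof.
  intro A. destruct l as [|z l].
  - exists None; auto.
  - assert (H : z :: l <> [] /\ alternating (z :: l)) by (split; [discriminate|auto]).
    exists (Some (exist (fun w => w <> [] /\ alternating w) _ H)); reflexivity.
Qed.

Lemma single_ok (x : letter S) : [x] <> [] /\ alternating [x].
Proof. split; [discriminate| exact Logic.I]. Qed.

Definition iota i (u : option (S i)) : W :=
  match u with None => None | Some y => Some (exist (fun w => w <> [] /\ alternating w) _ (single_ok (existT S i y))) end.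

Lemma toL_iota i u : toL (iota i u) = iL i u.
Proof. destruct u; reflexivity. Qed.

Lemma iota_hom i u v : iota i (adjS op i u v) = Fm (iota i u) (iota i v).
Proof.
  apply toL_inj. rewrite toL_mul, !toL_iota.
  destruct u as [u|], v as [v|]; simpl; auto.
  - rewrite glue_merge1; reflexivity.
Qed.

Definition Rrel i (rho : option (S i) -> option (S i) -> Prop) (s t : W) : Prop :=
  rho (hd_i i (toL s)) (hd_i i (toL t)) /\ tl_i i (toL s) = tl_i i (toL t).

Lemma Rrel_rc i rho : is_right_congruence (adjS op i) rho ->
  is_right_congruence Fm (Rrel i rho).
Proof.
  intros [R [Sy [Tr M]]]; unfold Rrel; split; [|split; [|split]].
  - intro x; split; [apply R|reflexivity].
  - intros x y [H1 H2]; split; auto.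
  - intros x y z [H1 H2] [H3 H4]; split; [eauto|congruence].
  - intros x y u [H1 H2]; rewrite !toL_mul.
    destruct (split_glue op i (toL x) (toL u)) as [A1 A2].
    destruct (split_glue op i (toL y) (toL u)) as [B1 B2].
    destruct (classic (tl_i i (toL x) = [])) as [E|E].
    + rewrite (proj1 (A2 E)), (proj1 (B2 ltac:(congruence))).
      rewrite (proj2 (A2 E)), (proj2 (B2 ltac:(congruence))). auto.
    + rewrite (proj1 (A1 E)), (proj1 (B1 ltac:(congruence))).
      rewrite (proj2 (A1 E)), (proj2 (B1 ltac:(congruence))). split; congruence.
Qed.


Lemma charF i a x0 (w : fp_word S) : proj1_sig w = a ++ [existT S i x0] ->
  forall s t, r_ann Fm (Some w) s t <-> Rrel i (r_ann (adjS op i) (Some x0)) s t.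
Proof.
  intros Hw s t. unfold r_ann, Rrel. rewrite !adjS_star.
  split.
  - intro E. apply (f_equal toL) in E. rewrite !toL_mul in E. simpl in E.
    rewrite Hw, !glue_last in E.
    apply app_inv_head in E. injection E as E1 E2. apply inj_pair2 in E1.
    split; congruence.
  - intros [E1 E2]. apply toL_inj. rewrite !toL_mul; simpl; rewrite Hw, !glue_last.
    injection E1 as E1. rewrite E1, E2; reflexivity.
Qed.

Lemma hd_iota i u : hd_i i (toL (iota i u)) = u.
Proof. rewrite toL_iota; apply hd_iL. Qed.
Lemma tl_iota i u : tl_i i (toL (iota i u)) = [].
Proof. rewrite toL_iota; apply tl_iL. Qed.

Lemma decomp i s s' : toL s' = tl_i i (toL s) -> s = Fm (iota i (hd_i i (toL s))) s'.
Proof. intro H. apply toL_inj. rewrite toL_mul, toL_iota, H. apply recon, toL_alt. Qed.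

Lemma last_letter (w : fp_word S) : exists a i x0, proj1_sig w = a ++ [existT S i x0].
Proof.
  destruct w as [l [N A]]; simpl.
  destruct (exists_last N) as [a [[i x0] ->]]. exists a, i, x0; reflexivity.
Qed.

Theorem core_from : (forall i, finitely_right_equated (adjS op i)) ->
  finitely_right_equated Fm.
Proof.
  intros H [w|].
  2:{ exists []; intros s t; unfold Fm; rewrite r_none, gen_nil; tauto. }
  destruct (last_letter w) as [a [i [x0 Hw]]].
  destruct (H i (Some x0)) as [X HX].
  exists (map (fun p => (iota i (fst p), iota i (snd p))) X).
  intros s t. rewrite (charF i a x0 w Hw). split.
  - intros [G1 G2] rho Hr HY.
    apply HX in G1.
    assert (B: rho (iota i (hd_i i (toL s))) (iota i (hd_i i (toL t)))).
    { apply (G1 (fun u v => rho (iota i u) (iota i v))).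
      - apply (rc_pullback _ _ (adjS op i) Fm (iota i) rho (iota_hom i) Hr).
      - intros p Hp; apply (HY (iota i (fst p), iota i (snd p))).
        apply (in_map (fun p => (iota i (fst p), iota i (snd p))) X p Hp). }
    destruct (ofL _ (alt_tl i _ (toL_alt s))) as [s' Hs'].
    rewrite (decomp i s s' Hs'), (decomp i t s' ltac:(congruence)).
    apply Hr, B.
  - intro G. apply (G (Rrel i (r_ann (adjS op i) (Some x0)))).
    + apply rc_iff with (Rrel i (right_congruence_generated (adjS op i) X)).
      * apply Rrel_rc, gen_rc.
      * intros; unfold Rrel; rewrite HX; tauto.
    + intros p Hp; apply in_map_iff in Hp; destruct Hp as [q [<- Hq]];
        unfold Rrel; simpl; rewrite !hd_iota, !tl_iota; split; [|auto].
      apply HX. destruct q as [q1 q2]; apply (gen_in _ _ X (q1,q2) Hq).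
Qed.

Theorem core_to : finitely_right_equated Fm ->
  forall i, finitely_right_equated (adjS op i).
Proof.
  intros H i [x0|].
  2:{ exists []; intros s t; unfold adjS; rewrite r_none, gen_nil; tauto. }
  destruct (H (iota i (Some x0))) as [Y HY].
  pose (w0 := exist (fun w => w <> [] /\ alternating w) _ (single_ok (existT S i x0))).
  assert (CH := charF i [] x0 w0 eq_refl).
  change (iota i (Some x0)) with (Some w0) in HY.
  exists (map (fun p => (hd_i i (toL (fst p)), hd_i i (toL (snd p)))) Y).
  intros u v. split.
  - intros Ru rho Hr HX.
    assert (G : right_congruence_generated Fm Y (iota i u) (iota i v)).
    { apply HY, CH. unfold Rrel; rewrite !hd_iota, !tl_iota; auto. }
    assert (G' := G (Rrel i rho) (Rrel_rc i rho Hr)).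
    destruct G' as [G1 _].
    + intros p Hp. unfold Rrel; split.
      * apply (HX (hd_i i (toL (fst p)), hd_i i (toL (snd p)))).
        apply (in_map (fun p => (hd_i i (toL (fst p)), hd_i i (toL (snd p)))) Y p Hp).
      * pose proof (gen_in _ Fm Y p Hp) as Gp. apply HY, CH in Gp. apply Gp.
    + rewrite !hd_iota in G1. exact G1.
  - intro G.
    assert (Rc : is_right_congruence (adjS op i)
       (fun u v => r_ann Fm (Some w0) (iota i u) (iota i v))).
    { apply (rc_pullback _ _ (adjS op i) Fm (iota i)); [apply iota_hom|].
      apply rc_iff with (right_congruence_generated Fm Y); [apply gen_rc|].
      intros; rewrite HY; tauto. }
    assert (P := G _ Rc). simpl in P.
    assert (Q : r_ann Fm (Some w0) (iota i u) (iota i v)).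
    { apply P. intros p Hp; apply in_map_iff in Hp; destruct Hp as [q [<- Hq]].
      simpl. apply CH. unfold Rrel; rewrite !hd_iota, !tl_iota; split; [|auto].
      destruct q as [q1 q2]. pose proof (gen_in _ Fm Y (q1,q2) Hq) as Gp.
      apply HY, CH in Gp. apply Gp. }
    apply CH in Q. unfold Rrel in Q. rewrite !hd_iota in Q. apply Q.
Qed.

End FP2.

Theorem mainTheorem9 (I : Type) (S : I -> Type) (op : forall i, S i -> S i -> S i)
  (assoc : forall i (x y z : S i), op i x (op i y z) = op i (op i x y) z) :
  one_finitely_right_equated (fp_mul op) <->
  (forall i, one_finitely_right_equated (op i)).
Proof.
  split.
  - intros H i. apply L_iff. apply (core_to I S op). apply L_iff in H. exact H.
  - intro H. apply L_iff. apply (core_from I S op). intro i. exact (proj1 (L_iff _ _) (H i)).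
Qed.
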